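(* In the setting described in the context, for every $j\in[\varepsilon^{-1}-\varepsilon^{-1/2}]$ it holds that $$\mathbb{E}\left[v(S_{j-1}\setminus S_j)\,\middle|\,\mathcal{F}_{j-1}\right]\ \ge\ v(x^j)\cdot\left(\varepsilon-\varepsilon^{3/2}\right)\cdot\frac{1}{1-(j-1)\varepsilon}.$$
   Context: A CMK instance is $\mathcal{I}=(I,w,v,m,k)$ with $I$ a finite item set, $w:I\to[0,1]$, $v:I\to\mathbb{R}_{\ge0}$, $m,k\in\mathbb{N}_{>0}$. A configuration is $C\subseteq I$ with $|C|\le k$ and $\sum_{i\in C}w(i)\le1$; $\mathcal{C}$ is the set of configurations and $\mathcal{C}(i)=\{C\in\mathcal{C}:i\in C\}$. A solution is a tuple of $m$ configurations, with value $v$ of their union; $\mathrm{OPT}(\mathcal{I})$ is the maximum value. A fractional solution is $x\in\mathbb{R}_{\ge0}^{\mathcal{C}}$, with $\mathrm{cover}_i(x)=\sum_{C\in\mathcal{C}(i)}x_C$, $\|x\|=\sum_Cx_C$; it is feasible if $\mathrm{cover}(x)\in[0,1]^I$; for $y\in\mathbb{R}^I$, $v(y)=\sum_iy_iv(i)$, and $v(x)=v(\mathrm{cover}(x))$. For $S\subseteq I$ and $\ell\in\mathbb{N}$, $\mathrm{LP}(S,\ell)$ is: maximize $v(x)$ over feasible fractional solutions $x$ with $x_C=0$ whenever $C\not\subseteq S$, and $\|x\|=\ell$. For $\|x\|\ne0$, a random configuration $R$ is distributed by $x$ ($R\sim x$) if $\Pr(R=C)=x_C/\|x\|$. Given $\varepsilon\in(0,0.1)$,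 $\mathcal{I}$ is $\varepsilon$-simple if $m>\exp(\exp(\varepsilon^{-30}))$ and $\varepsilon m\in\mathbb{N}$. Iterative randomized rounding: let $\varepsilon\in(0,0.1)$ with $\varepsilon^{-1/2}\in\mathbb{N}$ and $\mathcal{I}$ be $\varepsilon$-simple; let $q=\varepsilon m$ and $S_0=I$. For $j=1,\dots,\varepsilon^{-1}$: let $m_j=m(1-(j-1)\varepsilon)$; let $x^j$ be a $(1-\varepsilon)$-approximate solution of $\mathrm{LP}(S_{j-1},m_j)$ (a feasible solution of value at least $(1-\varepsilon)$ times its optimum), determined by the outcomes of the samples of previous iterations; sample independently $R^j_1,\dots,R^j_q\sim x^j$; set $S_j=S_{j-1}\setminus\bigcup_{b=1}^qR^j_b$. The output value is $V=v(I\setminus S_{\varepsilon^{-1}})$. Let $y^j=\mathrm{cover}(x^j)$. Let $\mathcal{F}_0$ be the trivial $\sigma$-algebra and $\mathcal{F}_j$ the $\sigma$-algebra generated by $\{R^{j'}_b: j'\le j,\ b\in[q]\}$. For $T\subseteq I$, $v(T)=\sum_{i\in T}v(i)$. *)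

(* Defs.v *)
From HB Require Import structures.
From mathcomp Require Import all_boot all_order all_algebra.
From mathcomp Require Import reals sequences exp.
Set Implicit Arguments. Unset Strict Implicit. Unset Printing Implicit Defensive.
Import Order.TTheory GRing.Theory Num.Theory.
Local Open Scope ring_scope.

Section CMK.
Context {R : realType} {I : finType}.

Definition is_config (w : I -> R) (k : nat) (C : {set I}) : bool :=
  (#|C| <= k)%N && (\sum_(i in C) w i <= 1).

Definition cover (x : {set I} -> R) (i : I) : R := \sum_(C : {set I} | i \in C) x C.
Definition fnorm (x : {set I} -> R) : R := \sum_(C : {set I}) x C.

Definition frac_feasible (w : I -> R) (k : nat) (x : {set I} -> R) : Prop :=
  (forall C : {set I}, 0 <= x C) /\ (forall C : {set I}, ~~ is_config w k C -> x C = 0) /\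
  (forall i, 0 <= cover x i <= 1).

Definition vvec (v : I -> R) (y : I -> R) : R := \sum_(i : I) y i * v i.
Definition vfrac (v : I -> R) (x : {set I} -> R) : R := vvec v (cover x).
Definition vset (v : I -> R) (T : {set I}) : R := \sum_(i in T) v i.

Definition LP_feasible (w : I -> R) (k : nat) (S : {set I}) (l : R) (x : {set I} -> R) : Prop :=
  frac_feasible w k x /\ (forall C : {set I}, ~~ (C \subset S) -> x C = 0) /\ fnorm x = l.

Definition approx_LP_sol (w : I -> R) (k : nat) (v : I -> R) (e : R)
    (S : {set I}) (l : R) (x : {set I} -> R) : Prop :=
  LP_feasible w k S l x /\
  (forall x', LP_feasible w k S l x' -> (1 - e) * vfrac v x' <= vfrac v x).

(* outcome of all samples: round t (0-indexed, t < N) , sample b < q *)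
Definition outcome (N q : nat) := {ffun 'I_N -> {ffun 'I_q -> {set I}}}.

Definition sample {N q : nat} (om : outcome N q) (t : nat) (b : 'I_q) : {set I} :=
  if (insub t : option 'I_N) is Some t' then om t' b else set0.

(* items covered by the samples of round t+1 (0-indexed t) *)
Definition removed {N q : nat} (om : outcome N q) (t : nat) : {set I} :=
  \bigcup_(b < q) sample om t b.

Fixpoint Sset {N q : nat} (om : outcome N q) (j : nat) : {set I} :=
  match j with
  | 0 => setT
  | j'.+1 => Sset om j' :\: removed om j'
  end.

Definition agree {N q : nat} (t : nat) (om om' : outcome N q) : bool :=
  [forall r : 'I_N, (r < t)%N ==> (om r == om' r)].

(* law of the process given the strategy X (X j om = x^j, j 1-indexed):
   Pr(om) = prod_j prod_b x^j_{R^j_b} / ||x^j|| *)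
Definition prob {N q : nat} (X : nat -> outcome N q -> {set I} -> R)
    (om : outcome N q) : R :=
  \prod_(t < N) \prod_(b < q) (X t.+1 om (om t b) / fnorm (X t.+1 om)).

(* conditional expectation of Z given F_t (sigma-algebra of rounds 1..t),
   evaluated at om (meaningful when om has positive probability) *)
Definition condexp {N q : nat} (X : nat -> outcome N q -> {set I} -> R)
    (t : nat) (Z : outcome N q -> R) (om : outcome N q) : R :=
  (\sum_(om' | agree t om om') prob X om' * Z om') /
  (\sum_(om' | agree t om om') prob X om').

End CMK.

(* Main.v *)
Require Import Defs.
From HB Require Import structures.
From mathcomp Require Import all_boot all_order all_algebra.
From mathcomp Require Import reals sequences exp.
From mathcomp Require Import ring lra.
Import Order.TTheory GRing.Theory Num.Theory.
Local Open Scope ring_scope.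
Set Implicit Arguments. Unset Strict Implicit.

Section Gen.
Variables (R : realType) (I : finType) (N q : nat).
Local Notation T := {ffun 'I_q -> {set I}}.
Local Notation Om := (@outcome I N q).

Definition upd (om : Om) (t : 'I_N) (c : T) : Om :=
  [ffun r => if r == t then c else om r].

Lemma upd_t om t c : upd om t c t = c.
Proof. by rewrite ffunE eqxx. Qed.
Lemma upd_ne om t c r : r != t -> upd om t c r = om r.
Proof. by rewrite ffunE => /negbTE ->. Qed.
Lemma upd_upd om t c c' : upd (upd om t c) t c' = upd om t c'.
Proof. by apply/ffunP => r; rewrite !ffunE; case: eqP. Qed.
Lemma upd_id om t : upd om t (om t) = om.
Proof. by apply/ffunP => r; rewrite !ffunE; case: eqP => // ->. Qed.

Lemma sum_upd (F : Om -> R) (t : 'I_N) (c0 : T) :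
  \sum_(om : Om) F om = \sum_(om : Om | om t == c0) \sum_(c : T) F (upd om t c).
Proof.
rewrite (partition_big (fun om : Om => om t) xpredT) //=.
rewrite [RHS]exchange_big /=; apply: eq_bigr => c _.
rewrite (reindex_onto (fun om => upd om t c) (fun om => upd om t c0)) /=; last first.
  by move=> om /eqP <-; rewrite upd_upd upd_id.
apply: eq_bigl => om; rewrite upd_t eqxx /= upd_upd.
apply/eqP/eqP => [<-|H]; first by rewrite upd_t.
by rewrite -H upd_id.
Qed.

Variable X : nat -> Om -> {set I} -> R.
Hypothesis Xadapt : forall (r : nat) (om om' : Om), (r < N)%N ->
  (forall r' : 'I_N, (r' < r)%N -> om r' = om' r') -> X r.+1 om = X r.+1 om'.
Hypothesis Xnn : forall (r : nat) (om : Om) C, (r < N)%N -> 0 <= X r.+1 om C.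
Hypothesis Xnorm : forall (r : nat) (om : Om), (r < N)%N -> fnorm (X r.+1 om) != 0.

Definition rratio (r : nat) (om : Om) (C : {set I}) := X r.+1 om C / fnorm (X r.+1 om).
Definition rw (r : 'I_N) (om : Om) := \prod_(b < q) rratio r om (om r b).
Definition PP (t : nat) (om : Om) := \prod_(r < N | (r < t)%N) rw r om.
Definition c0 : T := [ffun _ => set0].
Definition Ind (t : nat) (om : Om) : R := \prod_(r < N | (t <= r)%N) ((om r == c0)%:R).
Definition QQ t om := PP t om * Ind t om.

Lemma ratio_upd (r : nat) (t : 'I_N) om c : (r <= t)%N -> (r < N)%N ->
  rratio r (upd om t c) = rratio r om.
Proof.
move=> rt rN; rewrite /rratio (@Xadapt r (upd om t c) om) //.
move=> r' r'r; rewrite upd_ne //; apply/eqP => E.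
by move: r'r; rewrite E ltnNge rt.
Qed.

Lemma PP_upd (t : 'I_N) om c : PP t (upd om t c) = PP t om.
Proof.
apply: eq_bigr => r rt; rewrite /rw upd_ne; last first.
  by apply/eqP => E; move: rt; rewrite E ltnn.
by apply: eq_bigr => b _; rewrite ratio_upd // ltnW.
Qed.

Lemma PP_succ (t : 'I_N) om : PP t.+1 om = PP t om * rw t om.
Proof.
rewrite /PP (bigD1 t) //= mulrC; congr (_ * _); apply: eq_bigl => r.
by rewrite ltnS ltn_neqAle andbC.
Qed.

Lemma Ind_succ (t : 'I_N) om : Ind t om = (om t == c0)%:R * Ind t.+1 om.
Proof.
rewrite /Ind (bigD1 t) //=; congr (_ * _); apply: eq_bigl => r.
by rewrite ltn_neqAle eq_sym andbC.
Qed.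

Lemma Ind_upd (t : 'I_N) om c : Ind t.+1 (upd om t c) = Ind t.+1 om.
Proof.
apply: eq_bigr => r rt; rewrite upd_ne //; apply/eqP => E.
by move: rt; rewrite E ltnn.
Qed.

Lemma ratio_sum (r : 'I_N) om : \sum_C rratio r om C = 1.
Proof. by rewrite /rratio -mulr_suml -/(fnorm _) mulfV // Xnorm. Qed.

Lemma prod_sum1 (r : 'I_N) om : \sum_(c : T) \prod_(b < q) rratio r om (c b) = 1.
Proof.
rewrite -(bigA_distr_bigA (fun (b : 'I_q) (C : {set I}) => rratio r om C)) /=.
by rewrite big1 // => b _; apply: ratio_sum.
Qed.

Lemma step_gen (t : 'I_N) (G : Om -> R) :
  \sum_(om : Om) G om * QQ t.+1 om =
  \sum_(om : Om) QQ t om * \sum_(c : T) (\prod_(b < q) rratio t om (c b)) * G (upd om t c).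
Proof.
rewrite (sum_upd _ t c0) [RHS](bigID (fun om : Om => om t == c0)) /=.
rewrite [X in _ = _ + X]big1 ?addr0; last first.
  by move=> om /negbTE H; rewrite /QQ Ind_succ H mul0r mulr0 mul0r.
apply: eq_bigr => om /eqP Ht.
rewrite /QQ Ind_succ Ht eqxx mul1r big_distrr /=; apply: eq_bigr => c _.
rewrite PP_succ PP_upd Ind_upd /rw upd_t.
rewrite (eq_bigr (fun b => rratio t om (c b))); last first.
  by move=> b _; rewrite ratio_upd.
by rewrite mulrC -!mulrA; congr (_ * _); rewrite mulrCA mulrC.
Qed.

Lemma step_inv (t : 'I_N) (F : Om -> R) (HF : forall om c, F (upd om t c) = F om) :
  \sum_(om : Om) F om * QQ t.+1 om = \sum_(om : Om) F om * QQ t om.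
Proof.
rewrite step_gen; apply: eq_bigr => om _.
rewrite (eq_bigr (fun c : T => (\prod_(b < q) rratio t om (c b)) * F om)); last first.
  by move=> c _; rewrite HF.
by rewrite -big_distrl /= prod_sum1 mul1r mulrC.
Qed.

Lemma down (a : nat) (F : Om -> R)
  (HF : forall (t : 'I_N) om c, (a <= t)%N -> F (upd om t c) = F om) :
  forall n, (a + n <= N)%N ->
  \sum_(om : Om) F om * QQ (a + n) om = \sum_(om : Om) F om * QQ a om.
Proof.
elim=> [|n IH] H; first by rewrite addn0.
have Hlt : (a + n < N)%N by rewrite -addnS.
rewrite addnS (step_inv (t := Ordinal Hlt)); first exact: IH (ltnW Hlt).
by move=> om c; apply: HF; rewrite /= leq_addr.
Qed.


Lemma agreeP t (om om' : Om) : agree t om om' -> forall r : 'I_N, (r < t)%N -> om r = om' r.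
Proof. by move=> /forallP H r rt; move: (H r); rewrite rt => /eqP. Qed.

Lemma agree_updg (a : nat) (t : 'I_N) om0 om c : (a <= t)%N ->
  agree a om0 (upd om t c) = agree a om0 om.
Proof.
move=> at'; apply/forallP/forallP => H r; move: (H r); case: (ltnP r a) => //= ra.
  by rewrite upd_ne // neq_ltn (leq_trans ra at').
by rewrite upd_ne // neq_ltn (leq_trans ra at').
Qed.

Lemma agree_upd (a : 'I_N) om0 om c : agree a om0 (upd om a c) = agree a om0 om.
Proof. exact: agree_updg. Qed.

Lemma prob_QQ om : prob X om = QQ N om.
Proof.
rewrite /QQ /Ind big_pred0 ?mulr1; last by move=> r; rewrite leqNgt ltn_ord.
by rewrite /PP (eq_bigl xpredT) // => r; rewrite ltn_ord.
Qed.

Definition WW (a : nat) (om0 : Om) := \sum_(om : Om) QQ a om * (agree a om0 om)%:R.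
Definition E0 (a : 'I_N) (om0 : Om) (Z : Om -> R) :=
  \sum_(c : T) (\prod_(b < q) rratio a om0 (c b)) * Z (upd om0 a c).

Lemma num_eq (a : 'I_N) (om0 : Om) (Z : Om -> R)
  (HZ1 : forall (t : 'I_N) om c, (a < t)%N -> Z (upd om t c) = Z om)
  (HZ2 : forall om c, agree a om0 om -> Z (upd om a c) = Z (upd om0 a c)) :
  \sum_(om | agree a om0 om) prob X om * Z om = WW a om0 * E0 a om0 Z.
Proof.
rewrite big_mkcond /=.
rewrite (eq_bigr (fun om => ((agree a om0 om)%:R * Z om) * QQ N om)); last first.
  by move=> om _; rewrite prob_QQ; case: agree; rewrite ?mul1r ?mul0r // mulrC.
have aN : (a.+1 + (N - a.+1) <= N)%N by rewrite subnKC.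
have HF : forall (t : 'I_N) (om : Om) c, (a.+1 <= t)%N ->
    (agree a om0 (upd om t c))%:R * Z (upd om t c) = (agree a om0 om)%:R * Z om :> R.
  move=> t om c at'; rewrite HZ1 //.
  by rewrite agree_updg // ltnW.
have := down HF aN; rewrite subnKC // => ->.
rewrite step_gen /WW big_distrl /=; apply: eq_bigr => om _.
rewrite -mulrA; congr (_ * _).
case Ha: (agree a om0 om); last first.
  by rewrite mul0r big1 // => c _; rewrite agree_upd Ha mul0r mulr0.
rewrite mul1r /E0; apply: eq_bigr => c _.
rewrite agree_upd Ha mul1r HZ2 //; congr (_ * _); apply: eq_bigr => b _.
rewrite /rratio (@Xadapt a om om0) //; move=> r ra.
by rewrite (agreeP Ha).
Qed.

Lemma condexp_eq (a : 'I_N) (om0 : Om) (Z : Om -> R)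
  (HZ1 : forall (t : 'I_N) om c, (a < t)%N -> Z (upd om t c) = Z om)
  (HZ2 : forall om c, agree a om0 om -> Z (upd om a c) = Z (upd om0 a c))
  (HW : WW a om0 != 0) :
  condexp X a Z om0 = E0 a om0 Z.
Proof.
rewrite /condexp num_eq //.
have -> : \sum_(om | agree a om0 om) prob X om = WW a om0 * E0 a om0 (fun _ => 1).
  by rewrite -num_eq //; apply: eq_bigr => *; rewrite mulr1.
rewrite {2}/E0.
rewrite (eq_bigr (fun c : T => \prod_(b < q) rratio a om0 (c b))); last by move=> *; rewrite mulr1.
by rewrite prod_sum1 mulr1 mulrC mulKf.
Qed.

Lemma ratio_ge0 (r : 'I_N) om C : 0 <= rratio r om C.
Proof. by rewrite divr_ge0 // ?Xnn // sumr_ge0 // => D _; apply: Xnn. Qed.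

Lemma rw_ge0 (r : 'I_N) om : 0 <= rw r om.
Proof. by apply: prodr_ge0 => b _; apply: ratio_ge0. Qed.

Lemma PP_ge0 t om : 0 <= PP t om.
Proof. by apply: prodr_ge0 => r _; apply: rw_ge0. Qed.

Lemma PP_agree (a : nat) (om om' : Om) :
  (forall r : 'I_N, (r < a)%N -> om r = om' r) -> PP a om = PP a om'.
Proof.
move=> H; apply: eq_bigr => r ra; rewrite /rw H //; apply: eq_bigr => b _.
rewrite /rratio (@Xadapt r om om') // => r' r'r.
by apply: H; apply: ltn_trans ra.
Qed.

Lemma PP_pos (a : nat) om : 0 < prob X om -> 0 < PP a om.
Proof.
move=> hp; rewrite lt0r PP_ge0 andbT; apply/eqP => H0.
move: hp; rewrite /prob.
rewrite (bigID (fun r : 'I_N => (r < a)%N)) /=.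
by rewrite [X in X * _](_ : _ = PP a om) // H0 mul0r ltxx.
Qed.

Lemma WW_pos (a : nat) om0 : 0 < prob X om0 -> 0 < WW a om0.
Proof.
move=> hp; pose om1 : Om := [ffun r : 'I_N => if (r < a)%N then om0 r else c0].
have ag : forall r : 'I_N, (r < a)%N -> om0 r = om1 r by move=> r ra; rewrite ffunE ra.
rewrite /WW (bigD1 om1) //= ltr_wpDr //.
  by apply: sumr_ge0 => om _; rewrite mulr_ge0 // /QQ mulr_ge0 ?PP_ge0 //;
     apply: prodr_ge0 => r _.
have -> : agree a om0 om1 by apply/forallP => r; apply/implyP => ra; rewrite ag.
rewrite mulr1 /QQ /Ind big1 ?mulr1 -?(PP_agree ag) ?PP_pos //.
by move=> r; rewrite leqNgt ffunE => /negbTE ->; rewrite eqxx.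
Qed.

Lemma Sset_agree (t : nat) (om om' : Om) :
  (forall r : 'I_N, (r < t)%N -> om r = om' r) -> Sset om t = Sset om' t.
Proof.
elim: t => [//|t IH] H /=.
rewrite IH; last by move=> r rt; apply: H; apply: ltnW.
congr (_ :\: _); rewrite /removed; apply: eq_bigr => b _; rewrite /sample.
by case: insubP => // t' _ Et; rewrite H // Et.
Qed.

Lemma removed_upd (a : 'I_N) om c : removed (upd om a c) a = \bigcup_(b < q) c b.
Proof. by rewrite /removed; apply: eq_bigr => b _; rewrite /sample valK upd_t. Qed.

End Gen.

Section Prob.
Variables (R : realType) (I : finType) (q : nat).
Local Notation T := {ffun 'I_q -> {set I}}.

Lemma vset_IU (v : I -> R) (S U : {set I}) :
  vset v (S :\: (S :\: U)) = \sum_(i in S) v i * (i \in U)%:R.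
Proof.
rewrite setDDr setDv set0U /vset big_mkcond [RHS]big_mkcond /=.
apply: eq_bigr => i _; rewrite inE; case: (i \in S); case: (i \in U) => /=;
  by rewrite ?mulr1 ?mulr0.
Qed.

Lemma ind_cup (i : I) (c : T) :
  (i \in \bigcup_(b < q) c b)%:R = 1 - \prod_(b < q) ((i \notin c b)%:R : R).
Proof.
case: (boolP (i \in \bigcup_(b < q) c b)) => [/bigcupP [b _ ib]|ni] /=.
  by rewrite (bigD1 b) //= ib mul0r subr0.
rewrite big1 ?subrr // => b _; case: (boolP (i \in c b)) => // ib.
by case/negP: ni; apply/bigcupP; exists b.
Qed.

Lemma E0_formula (p : {set I} -> R) (hp1 : \sum_C p C = 1) (v : I -> R) (S : {set I}) :
  \sum_(c : T) (\prod_(b < q) p (c b)) * vset v (S :\: (S :\: \bigcup_(b < q) c b))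
  = \sum_(i in S) v i * (1 - (1 - \sum_(C : {set I} | i \in C) p C) ^+ q).
Proof.
rewrite (eq_bigr (fun c : T => \sum_(i in S) v i *
   ((\prod_(b < q) p (c b)) * (i \in \bigcup_(b < q) c b)%:R))); last first.
  move=> c _; rewrite vset_IU big_distrr /=; apply: eq_bigr => i _.
  by rewrite mulrCA.
rewrite exchange_big /=; apply: eq_bigr => i _; rewrite -big_distrr /=.
congr (_ * _).
rewrite (eq_bigr (fun c : T => \prod_(b < q) p (c b) -
   \prod_(b < q) (p (c b) * (i \notin c b)%:R))); last first.
  by move=> c _; rewrite ind_cup mulrBr mulr1 big_split.
rewrite sumrB.
rewrite -(bigA_distr_bigA (fun (b : 'I_q) (C : {set I}) => p C)) /=.
rewrite -(bigA_distr_bigA (fun (b : 'I_q) (C : {set I}) => p C * (i \notin C)%:R)) /=.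
rewrite !prodr_const card_ord hp1 expr1n; congr (_ - _ ^+ _).
have -> : \sum_C p C * ((i \notin C)%:R : R) = \sum_(C : {set I} | i \notin C) p C.
  by rewrite [RHS]big_mkcond; apply: eq_bigr => C _; case: (i \in C); rewrite ?mulr0 ?mulr1.
by rewrite -hp1 [in RHS](bigID (fun C : {set I} => i \in C)) /= addrC addrK.
Qed.

Lemma bern (p : R) (n : nat) : 0 <= p <= 1 ->
  (1 - p) ^+ n <= 1 - n%:R * p + (n%:R * p) ^+ 2 / 2.
Proof.
move=> /andP [p0 p1]; elim: n => [|n IH]; first by rewrite expr0 mul0r expr0n /= mul0r !subr0 addr0.
rewrite exprS.
have h1 : 0 <= 1 - p by rewrite subr_ge0.
apply: le_trans (ler_wpM2l h1 IH) _.
have hn : 0 <= n%:R :> R by [].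
set x := n%:R : R.
have -> : (n.+1%:R : R) = x + 1 by rewrite /x -natr1.
have h2 : 0 <= p * p * x * x * p by rewrite !mulr_ge0.
have h3 : 0 <= p * p by rewrite mulr_ge0.
rewrite -subr_ge0.
have -> : 1 - (x + 1) * p + ((x + 1) * p) ^+ 2 / 2 -
   (1 - p) * (1 - x * p + (x * p) ^+ 2 / 2) = p * p / 2 + (p * p * x * x * p) / 2.
  by field.
by rewrite addr_ge0 // divr_ge0.
Qed.

End Prob.

Unset Implicit Arguments.
Set Strict Implicit.

Theorem lemma4p3 (R : realType) (I : finType) (w v : I -> R) (m k : nat)
  (hw : forall i, 0 <= w i <= 1) (hv : forall i, 0 <= v i)
  (hm : (0 < m)%N) (hk : (0 < k)%N)
  (e : R) (he : 0 < e < 1 / 10)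
  (K : nat) (hK : Num.sqrt (e^-1) = K%:R)
  (hsimple : expR (expR (e ^- 30)) < m%:R)
  (q : nat) (hq : e * m%:R = q%:R)
  (X : nat -> outcome (K ^ 2) q -> {set I} -> R)
  (hXadapt : forall (j : nat) (om om' : outcome (K ^ 2) q),
      (1 <= j <= K ^ 2)%N -> agree j.-1 om om' -> X j om = X j om')
  (hXapprox : forall (j : nat) (om : outcome (K ^ 2) q),
      (1 <= j <= K ^ 2)%N ->
      approx_LP_sol w k v e (Sset om j.-1) (m%:R * (1 - (j.-1)%:R * e)) (X j om))
  (j : nat) (hj : (1 <= j <= K ^ 2 - K)%N)
  (om : outcome (K ^ 2) q) (hom : 0 < prob X om) :
  vfrac v (X j om) * (e - e * Num.sqrt e) * (1 - (j.-1)%:R * e)^-1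
    <= condexp X j.-1 (fun om' => vset v (Sset om' j.-1 :\: Sset om' j)) om.
Proof.
case: j hj => [//|a] hj /=.
move: he => /andP [e0 e1].
set kk : R := K%:R.
set s := Num.sqrt e.
have s0 : 0 <= s by apply: sqrtr_ge0.
have sk : s * kk = 1.
  by rewrite /s /kk -hK -sqrtrM ?ltW // mulfV ?gt_eqF // sqrtr1.
have es : e = s ^+ 2 by rewrite sqr_sqrtr // ltW.
have K1 : (1 <= K)%N.
  rewrite lt0n; apply/eqP => K0; move: sk; rewrite /kk K0 mulr0 => /eqP.
  by rewrite eq_sym oner_eq0.
have kk1 : 1 <= kk by rewrite /kk ler1n.
have KK : (K <= K ^ 2)%N by rewrite -{1}(expn1 K) leq_pexp2l.
have aK : (a <= K ^ 2 - K)%N by apply: leq_trans hj; rewrite leqnSn.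
have aR : a%:R <= kk ^+ 2 - kk.
  by rewrite /kk -natrX -natrB // ler_nat.
have D_s : s <= 1 - a%:R * e.
  have : a%:R * e <= (kk ^+ 2 - kk) * e by rewrite ler_wpM2r // ltW.
  have -> : (kk ^+ 2 - kk) * e = 1 - s.
    by rewrite es; transitivity ((s * kk) ^+ 2 - s * (s * kk)); [ring | rewrite sk; ring].
  lra.
have rpos : forall r : nat, (r < K ^ 2)%N -> 0 < 1 - r%:R * e.
  move=> r rK.
  have : r%:R <= kk ^+ 2 - 1.
    by rewrite /kk -natrX -(natrB _ (leq_trans K1 KK)) ler_nat -ltnS subn1 prednK // (leq_trans K1 KK).
  move=> hr.
  have : r%:R * e <= (kk ^+ 2 - 1) * e by rewrite ler_wpM2r // ltW.
  have -> : (kk ^+ 2 - 1) * e = 1 - s ^+ 2 by rewrite es; transitivity ((s * kk) ^+ 2 - s ^+ 2); [ring | rewrite sk; ring].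
  have : 0 < s ^+ 2 by rewrite -es.
  lra.
have Ha : (a < K ^ 2)%N by apply: leq_trans hj _; rewrite leq_subr.
have Hfeas : forall r (o : outcome (K ^ 2) q), (r < K ^ 2)%N ->
    approx_LP_sol w k v e (Sset o r) (m%:R * (1 - r%:R * e)) (X r.+1 o).
  by move=> r o rK; exact: (hXapprox r.+1 o rK).
have Xadapt' : forall (r : nat) (o o' : outcome (K ^ 2) q), (r < K ^ 2)%N ->
    (forall r' : 'I_(K ^ 2), (r' < r)%N -> o r' = o' r') -> X r.+1 o = X r.+1 o'.
  move=> r o o' rK H; apply: hXadapt => //.
  by apply/forallP => r'; apply/implyP => h; rewrite H.
have Xnn' : forall (r : nat) (o : outcome (K ^ 2) q) C, (r < K ^ 2)%N -> 0 <= X r.+1 o C.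
  by move=> r o C rK; case: (Hfeas r o rK) => [[[h _] _] _]; apply: h.
have Xnorm' : forall (r : nat) (o : outcome (K ^ 2) q), (r < K ^ 2)%N -> fnorm (X r.+1 o) != 0.
  move=> r o rK; case: (Hfeas r o rK) => [[_ [_ ->]] _].
  by rewrite mulf_neq0 // ?pnatr_eq0 -?lt0n // gt_eqF // rpos.
pose Z := fun om' : outcome (K ^ 2) q => vset v (Sset om' a :\: Sset om' a.+1).
have HC : condexp X a Z om = E0 X (Ordinal Ha) om Z.
  apply: (@condexp_eq _ _ _ _ _ Xadapt' Xnorm' (Ordinal Ha)).
  - move=> t o c /= at'; rewrite /Z.
    rewrite (@Sset_agree _ _ _ a (upd o t c) o) ?(@Sset_agree _ _ _ a.+1 (upd o t c) o) //.
      by move=> r ra; rewrite upd_ne // neq_ltn (leq_trans ra at').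
    by move=> r ra; rewrite upd_ne // neq_ltn (leq_trans ra (ltnW at')).
  - move=> o c ag; rewrite /Z.
    have H : forall r : 'I_(K ^ 2), (r < a.+1)%N -> upd o (Ordinal Ha) c r = upd om (Ordinal Ha) c r.
      move=> r; rewrite ltnS leq_eqVlt => /orP [/eqP ra | ra].
        have -> : r = Ordinal Ha by apply: val_inj.
        by rewrite !upd_t.
      by rewrite !upd_ne ?neq_ltn ?ra // (agreeP ag).
    rewrite (Sset_agree H) (@Sset_agree _ _ _ a _ _ (fun r ra => H r (ltnW ra))) //.
  - by rewrite gt_eqF // (WW_pos Xadapt' Xnn').
rewrite HC.
have HE : E0 X (Ordinal Ha) om Z = \sum_(i in Sset om a)
    v i * (1 - (1 - \sum_(C : {set I} | i \in C) rratio X a om C) ^+ q).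
  rewrite /E0 -(E0_formula q (ratio_sum Xnorm' (Ordinal Ha) om) v (Sset om a)).
  apply: eq_bigr => c _; congr (_ * _); rewrite /Z /= removed_upd.
  rewrite (@Sset_agree _ _ _ a (upd om (Ordinal Ha) c) om) //.
  by move=> r ra; rewrite upd_ne // neq_ltn ra.
rewrite HE.
case: (Hfeas a om Ha) => [[[xnn [_ xcov]] [xsupp xnorm]] _].
set x := X a.+1 om in xnn xcov xsupp xnorm *.
set S := Sset om a in xsupp *.
set D := 1 - a%:R * e in xnorm D_s *.
have D0 : 0 < D by apply: lt_le_trans D_s; rewrite /s sqrtr_gt0.
have m0 : 0 < m%:R :> R by rewrite ltr0n.
set L := m%:R * D in xnorm.
have L0 : 0 < L by rewrite mulr_gt0.
have y0 : forall i, i \notin S -> Defs.cover x i = 0.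
  move=> i iS; apply: big1 => C iC; apply: xsupp; apply/negP => sub.
  by move: iS; rewrite (subsetP sub i iC).
rewrite /vfrac /vvec (bigID (fun i => i \in S)) /= [W in _ + W]big1 ?addr0; last first.
  by move=> i /y0 ->; rewrite mul0r.
rewrite !mulr_suml; apply: ler_sum => i iS.
have Hy : \sum_(C : {set I} | i \in C) rratio X a om C = Defs.cover x i / L.
  by rewrite /rratio -/x xnorm -mulr_suml.
rewrite Hy.
set y := Defs.cover x i.
have /andP [y0' y1] := xcov i.
have yL : y <= L.
  rewrite -xnorm /fnorm /y /Defs.cover [W in _ <= W](bigID (fun C : {set I} => i \in C)) /=.
  by rewrite lerDl sumr_ge0 // => C _; apply: xnn.
set P := y / L.
have P0 : 0 <= P by rewrite divr_ge0 // ltW.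
have P1 : P <= 1 by rewrite ler_pdivrMr // mul1r.
have B : (1 - P) ^+ q <= 1 - q%:R * P + (q%:R * P) ^+ 2 / 2 by apply: bern; rewrite P0 P1.
set u := e * y / D.
have qP : q%:R * P = u by rewrite -hq /P /u /L; field; rewrite ?gt_eqF.
rewrite qP in B.
have hu0 : 0 <= u by rewrite /u divr_ge0 ?mulr_ge0 // ltW.
have hus : u <= s.
  rewrite /u ler_pdivrMr //.
  have : e * y <= e by rewrite ler_piMr // ltW.
  have : s * s <= s * D by rewrite ler_wpM2l.
  rewrite es expr2; lra.
have h1 : u - u ^+ 2 / 2 <= 1 - (1 - P) ^+ q by lra.
have h2 : y * (e - e * s) * D^-1 = u * (1 - s) by rewrite /u; field; rewrite gt_eqF.
have h3 : 0 <= u * (s - u) by rewrite mulr_ge0 // subr_ge0.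
have h4 : u * (1 - s) <= u - u ^+ 2 / 2 by rewrite expr2; nra.
apply: (le_trans (y := (y * (e - e * s) * D^-1) * v i)).
  by rewrite le_eqVlt; apply/orP; left; apply/eqP; ring.
rewrite h2 [W in _ <= W]mulrC; apply: ler_wpM2r; [exact: hv | lra].
Qed.
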